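(* Let $\mathrm{Pr}_T(x)$ be a provability predicate of $T$ satisfying condition $\mathbf{M}$. Then $\mathsf{MN}\subseteq \mathsf{PL}(\mathrm{Pr}_T)$. Furthermore, $\mathrm{Pr}_T(x)$ satisfies condition $\mathbf{D3}$ if and only if $\mathsf{MNF}\subseteq\mathsf{PL}(\mathrm{Pr}_T)$.
   Context: $T$ is a primitive recursively axiomatized consistent extension of Peano Arithmetic $\mathsf{PA}$ in the language of first-order arithmetic; $\ulcorner\varphi\urcorner$ denotes the numeral of the Gödel number of $\varphi$. A provability predicate of $T$ is a formula $\mathrm{Pr}_T(x)$ such that for every $n\in\omega$, $\mathsf{PA}\vdash\mathrm{Pr}_T(\overline{n})$ iff $n$ is the Gödel number of a theorem of $T$. Condition $\mathbf{M}$: if $T\vdash\varphi\to\psi$ then $T\vdash\mathrm{Pr}_T(\ulcorner\varphi\urcorner)\to\mathrm{Pr}_T(\ulcorner\psi\urcorner)$. Condition $\mathbf{D3}$: $T\vdash\mathrm{Pr}_T(\ulcorner\varphi\urcorner)\to\mathrm{Pr}_T(\ulcorner\mathrm{Pr}_T(\ulcorner\varphi\urcorner)\urcorner)$ for every formula $\varphi$. The modal language has propositional variables, $\bot$, $\to$, $\Box$. An arithmetical interpretation based on $\mathrm{Pr}_T$ is a map $f$ from modal formulas to arithmetic sentences (arbitrary on propositional variables) with $f(\bot)$ being $0=1$, $f(A\to B)=f(A)\to f(B)$, $f(\Box A)=\mathrm{Pr}_T(\ulcorner f(A)\urcorner)$. $\mathsf{PL}(\mathrm{Pr}_T)$ is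 the set of modal formulas $A$ such that $T\vdash f(A)$ for all arithmetical interpretations $f$ based on $\mathrm{Pr}_T$. $\mathsf{MN}$ is the modal logic with all tautologies as axioms and rules modus ponens, necessitation ($A/\Box A$) and RM ($A\to B/\Box A\to\Box B$); $\mathsf{MNF}$ is $\mathsf{MN}$ plus the scheme $\Box A\to\Box\Box A$. *)

(* Defs.v *)
From Stdlib Require Import Arith List.
Import ListNotations.

Inductive term : Type :=
| tvar  : nat -> term
| tzero : term
| tsucc : term -> term
| tplus : term -> term -> term
| tmult : term -> term -> term.

Inductive form : Type :=
| fbot : form
| fimp : form -> form -> form
| feq  : term -> term -> form
| fall : form -> form.           (* binds de Bruijn index 0 *)

Fixpoint tsubst (s : nat -> term) (t : term) : term :=
  match t with
  | tvar n => s n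
  | tzero => tzero
  | tsucc u => tsucc (tsubst s u)
  | tplus u v => tplus (tsubst s u) (tsubst s v)
  | tmult u v => tmult (tsubst s u) (tsubst s v)
  end.

Definition tshift (t : term) : term := tsubst (fun k => tvar (S k)) t.

Definition up (s : nat -> term) : nat -> term :=
  fun n => match n with 0 => tvar 0 | S k => tshift (s k) end.

Fixpoint fsubst (s : nat -> term) (phi : form) : form :=
  match phi with
  | fbot => fbot
  | fimp a b => fimp (fsubst s a) (fsubst s b)
  | feq u v => feq (tsubst s u) (tsubst s v)
  | fall a => fall (fsubst (up s) a)
  end.

Definition inst (t : term) (phi : form) : form :=
  fsubst (fun n => match n with 0 => t | S k => tvar k end) phi.

Definition lift (phi : form) : form := fsubst (fun k => tvar (S k)) phi.

Fixpoint tbound (n : nat) (t : term) : Prop :=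
  match t with
  | tvar k => k < n
  | tzero => True
  | tsucc u => tbound n u
  | tplus u v | tmult u v => tbound n u /\ tbound n v
  end.

Fixpoint fbound (n : nat) (phi : form) : Prop :=
  match phi with
  | fbot => True
  | fimp a b => fbound n a /\ fbound n b
  | feq u v => tbound n u /\ tbound n v
  | fall a => fbound (S n) a
  end.

Definition sentence (phi : form) : Prop := fbound 0 phi.

Inductive Prv (Ax : form -> Prop) : form -> Prop :=
| P_ax   : forall phi, Ax phi -> Prv Ax phi
| P_K    : forall a b, Prv Ax (fimp a (fimp b a))
| P_S    : forall a b c,
    Prv Ax (fimp (fimp a (fimp b c)) (fimp (fimp a b) (fimp a c)))
| P_DN   : forall a, Prv Ax (fimp (fimp (fimp a fbot) fbot) a)
| P_inst : forall a t, Prv Ax (fimp (fall a) (inst t a))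
| P_dist : forall a b, Prv Ax (fimp (fall (fimp a b)) (fimp (fall a) (fall b)))
| P_vac  : forall a, Prv Ax (fimp a (fall (lift a)))
| P_refl : forall t, Prv Ax (feq t t)
| P_leib : forall a s t, Prv Ax (fimp (feq s t) (fimp (inst s a) (inst t a)))
| P_mp   : forall a b, Prv Ax (fimp a b) -> Prv Ax a -> Prv Ax b
| P_gen  : forall a, Prv Ax a -> Prv Ax (fall a).

(* ---------- Peano Arithmetic (open axioms, read as universal closures) ---------- *)
Definition v0 := tvar 0.
Definition v1 := tvar 1.

Definition succ_var0 : nat -> term :=
  fun n => match n with 0 => tsucc (tvar 0) | k => tvar k end.

Inductive PA : form -> Prop :=
| PA1 : PA (fimp (feq (tsucc v0) tzero) fbot)
| PA2 : PA (fimp (feq (tsucc v0) (tsucc v1)) (feq v0 v1))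
| PA3 : PA (feq (tplus v0 tzero) v0)
| PA4 : PA (feq (tplus v0 (tsucc v1)) (tsucc (tplus v0 v1)))
| PA5 : PA (feq (tmult v0 tzero) tzero)
| PA6 : PA (feq (tmult v0 (tsucc v1)) (tplus (tmult v0 v1) v0))
| PA7_ind : forall phi,
    PA (fimp (inst tzero phi)
             (fimp (fall (fimp phi (fsubst succ_var0 phi))) (fall phi))).

Definition cpair (m n : nat) : nat := (m + n) * (m + n + 1) / 2 + m.

Fixpoint tcode (t : term) : nat :=
  match t with
  | tvar n => cpair 0 n
  | tzero => cpair 1 0
  | tsucc u => cpair 2 (tcode u)
  | tplus u v => cpair 3 (cpair (tcode u) (tcode v))
  | tmult u v => cpair 4 (cpair (tcode u) (tcode v))
  end.

Fixpoint gn (phi : form) : nat :=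
  match phi with
  | fbot => cpair 0 0
  | fimp a b => cpair 1 (cpair (gn a) (gn b))
  | feq u v => cpair 2 (cpair (tcode u) (tcode v))
  | fall a => cpair 3 (gn a)
  end.

Fixpoint numeral (n : nat) : term :=
  match n with 0 => tzero | S k => tsucc (numeral k) end.

Definition PrAt (Pr : form) (phi : form) : form := inst (numeral (gn phi)) Pr.

Inductive PRF : nat -> (list nat -> nat) -> Prop :=
| pr_zero : forall n, PRF n (fun _ => 0)
| pr_succ : PRF 1 (fun l => S (hd 0 l))
| pr_proj : forall n i, i < n -> PRF n (fun l => nth i l 0)
| pr_comp : forall n g hs, PRF (length hs) g -> Forall (PRF n) hs ->
    PRF n (fun l => g (map (fun h => h l) hs))
| pr_rec : forall n g h, PRF n g -> PRF (S (S n)) h ->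
    PRF (S n) (fun l => nat_rect (fun _ => nat) (g (tl l))
                          (fun k acc => h (k :: acc :: tl l)) (hd 0 l)).

Definition prim_rec1 (f : nat -> nat) : Prop :=
  exists g, PRF 1 g /\ forall n, g [n] = f n.

Definition pr_axiomatized (T : form -> Prop) : Prop :=
  exists chi : nat -> nat, prim_rec1 chi /\
    forall n, chi n <> 0 <-> exists phi, n = gn phi /\ T phi.

Definition consistent (T : form -> Prop) : Prop := ~ Prv T fbot.

Definition extends_PA (T : form -> Prop) : Prop := forall phi, Prv PA phi -> Prv T phi.

(* Pr(x) (free variable x = index 0) is a provability predicate of T *)
Definition prov_pred (T : form -> Prop) (Pr : form) : Prop :=
  fbound 1 Pr /\
  forall n, Prv PA (inst (numeral n) Pr) <-> exists phi, n = gn phi /\ Prv T phi.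

Definition condM (T : form -> Prop) (Pr : form) : Prop :=
  forall phi psi, sentence phi -> sentence psi ->
    Prv T (fimp phi psi) -> Prv T (fimp (PrAt Pr phi) (PrAt Pr psi)).

Definition condD3 (T : form -> Prop) (Pr : form) : Prop :=
  forall phi, sentence phi ->
    Prv T (fimp (PrAt Pr phi) (PrAt Pr (PrAt Pr phi))).

Inductive mform : Type :=
| mvar : nat -> mform
| mbot : mform
| mimp : mform -> mform -> mform
| mbox : mform -> mform.

Fixpoint meval (val : mform -> bool) (A : mform) : bool :=
  match A with
  | mvar _ => val A
  | mbot => false
  | mimp B C => implb (meval val B) (meval val C)
  | mbox _ => val A
  end.

Definition tautology (A : mform) : Prop := forall val, meval val A = true.

Inductive mder (four : bool) : mform -> Prop :=
| md_taut : forall A, tautology A -> mder four A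
| md_mp   : forall A B, mder four (mimp A B) -> mder four A -> mder four B
| md_nec  : forall A, mder four A -> mder four (mbox A)
| md_rm   : forall A B, mder four (mimp A B) -> mder four (mimp (mbox A) (mbox B))
| md_4    : forall A, four = true -> mder four (mimp (mbox A) (mbox (mbox A))).

Definition MN := mder false.
Definition MNF := mder true.

Fixpoint interp (Pr : form) (v : nat -> form) (A : mform) : form :=
  match A with
  | mvar p => v p
  | mbot => feq tzero (tsucc tzero)
  | mimp B C => fimp (interp Pr v B) (interp Pr v C)
  | mbox B => PrAt Pr (interp Pr v B)
  end.

Definition PL (T : form -> Prop) (Pr : form) (A : mform) : Prop :=
  forall v : nat -> form, (forall p, sentence (v p)) -> Prv T (interp Pr v A).

(* Main.v *)
Require Import Defs.
From Stdlib Require Import Arith List Lia.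
Import ListNotations.

Section P.
Variable T : form -> Prop.

Inductive Pder (G : list form) : form -> Prop :=
| pd_hyp : forall f, In f G -> Pder G f
| pd_thm : forall f, Prv T f -> Pder G f
| pd_mp : forall a b, Pder G (fimp a b) -> Pder G a -> Pder G b.

Lemma Prv_I a : Prv T (fimp a a).
Proof.
  eapply P_mp. eapply P_mp. apply (P_S T a (fimp a a) a). apply P_K. apply P_K.
Qed.

Lemma cut G f : Pder G f -> forall D, (forall g, In g G -> Pder D g) -> Pder D f.
Proof.
  induction 1; intros D HD; auto.
  - apply pd_thm; auto.
  - eapply pd_mp; eauto.
Qed.

Lemma weak G f a : Pder G f -> Pder (a :: G) f.
Proof. intros H; eapply cut; eauto. intros g Hg; apply pd_hyp; simpl; auto. Qed.

Lemma ded G a b : Pder (a :: G) b -> Pder G (fimp a b).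
Proof.
  induction 1.
  - destruct H as [<-|H].
    + apply pd_thm, Prv_I.
    + eapply pd_mp. apply pd_thm, P_K. apply pd_hyp; auto.
  - eapply pd_mp. apply pd_thm, P_K. apply pd_thm; auto.
  - eapply pd_mp. eapply pd_mp. apply pd_thm, P_S. eauto. eauto.
Qed.

Lemma efq G f : Pder G fbot -> Pder G f.
Proof.
  intros H. eapply pd_mp. apply pd_thm, P_DN.
  eapply pd_mp. apply pd_thm, P_K. exact H.
Qed.

Lemma pder_prv f : Pder [] f -> Prv T f.
Proof.
  induction 1; auto. destruct H. eapply P_mp; eauto.
Qed.

Lemma cases G x f : Pder G (fimp x f) -> Pder G (fimp (fimp x fbot) f) -> Pder G f.
Proof.
  intros H1 H2. eapply pd_mp. apply pd_thm, P_DN. apply ded.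
  eapply pd_mp. apply pd_hyp; left; reflexivity.
  eapply pd_mp. apply weak, H2. apply ded.
  eapply pd_mp. apply pd_hyp; right; left; reflexivity.
  eapply pd_mp. apply weak, weak, H1. apply pd_hyp; left; reflexivity.
Qed.

Definition litf (b : bool) (f : form) := if b then f else fimp f fbot.

Fixpoint atoms (A : mform) : list mform :=
  match A with
  | mvar n => [mvar n]
  | mbot => []
  | mimp B C => atoms B ++ atoms C
  | mbox B => [mbox B]
  end.

Variable Pr : form.
Variable v : nat -> form.

Hypothesis Hbot : Prv T (fimp (feq tzero (tsucc tzero)) fbot).

Lemma kalmar G val A :
  (forall X, In X (atoms A) -> Pder G (litf (val X) (interp Pr v X))) ->
  Pder G (litf (meval val A) (interp Pr v A)).
Proof.
  induction A; intros H; simpl.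
  - apply (H (mvar n)); simpl; auto.
  - apply pd_thm, Hbot.
  - simpl in H.
    assert (IH1 := IHA1 (fun X HX => H X (in_or_app _ _ _ (or_introl HX)))).
    assert (IH2 := IHA2 (fun X HX => H X (in_or_app _ _ _ (or_intror HX)))).
    destruct (meval val A1), (meval val A2); simpl in *.
    + eapply pd_mp. apply pd_thm, P_K. exact IH2.
    + apply ded. eapply pd_mp. apply weak, IH2.
      eapply pd_mp. apply pd_hyp; left; reflexivity. apply weak, IH1.
    + apply ded. apply weak, IH2.
    + apply ded. apply efq. eapply pd_mp. apply weak, IH1. apply pd_hyp; left; reflexivity.
  - apply (H (mbox A)); simpl; auto.
Qed.

Definition mdec : forall x y : mform, {x = y} + {x <> y}.
Proof. decide equality; apply Nat.eq_dec. Defined.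

Definition lit (val : mform -> bool) X := litf (val X) (interp Pr v X).

Lemma elim L : forall G f, (forall val, Pder (map (lit val) L ++ G) f) -> Pder G f.
Proof.
  induction L as [|X L IH]; intros G f H.
  - apply (H (fun _ => true)).
  - apply IH. intros val.
    assert (Hb : forall b, Pder (litf b (interp Pr v X) :: map (lit val) L ++ G) f).
    { intros b. set (u := fun Y => if mdec Y X then b else val Y).
      specialize (H u). simpl in H. eapply cut. exact H.
      intros g [Hg|Hg].
      - subst g. unfold lit, u. destruct (mdec X X); [|congruence].
        apply pd_hyp; left; reflexivity.
      - apply in_app_or in Hg as [Hg|Hg].
        + apply in_map_iff in Hg as [Y [<- HY]]. unfold lit, u.
          destruct (mdec Y X).
          * subst. apply pd_hyp; left; reflexivity.
          * apply pd_hyp; right. apply in_or_app; left. apply in_map_iff.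
            exists Y; split; auto.
        + apply pd_hyp; right; apply in_or_app; right; auto. }
    apply cases with (x := interp Pr v X); apply ded; [apply (Hb true)|apply (Hb false)].
Qed.

Lemma taut_prv A : tautology A -> Prv T (interp Pr v A).
Proof.
  intros Ht. apply pder_prv. apply (elim (atoms A)). intros val.
  rewrite app_nil_r.
  assert (Hk := kalmar (map (lit val) (atoms A)) val A).
  rewrite Ht in Hk. apply Hk. intros X HX. apply pd_hyp.
  apply in_map_iff. exists X; auto.
Qed.

End P.

Lemma tbound_subst t : forall n m s, tbound n t -> (forall k, k < n -> tbound m (s k)) ->
  tbound m (tsubst s t).
Proof. induction t; simpl; intros; intuition eauto. Qed.

Lemma fbound_subst f : forall n m s, fbound n f -> (forall k, k < n -> tbound m (s k)) ->
  fbound m (fsubst s f).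
Proof.
  induction f; simpl; intros n m s H1 H2; intuition eauto using tbound_subst.
  eapply IHf; eauto. intros [|k] Hk; simpl. lia.
  unfold tshift. eapply tbound_subst. apply H2; lia. simpl; intros; lia.
Qed.

Lemma numeral_closed n : tbound 0 (numeral n).
Proof. induction n; simpl; auto. Qed.

Lemma interp_sentence Pr v A : fbound 1 Pr -> (forall p, sentence (v p)) ->
  sentence (interp Pr v A).
Proof.
  intros HPr Hv. induction A; simpl; unfold sentence in *; simpl; auto.
  unfold PrAt, inst. eapply fbound_subst; eauto.
  intros [|k] Hk; simpl. apply numeral_closed. lia.
Qed.

Lemma bot_prv T : extends_PA T -> Prv T (fimp (feq tzero (tsucc tzero)) fbot).
Proof.
  intros HE.
  assert (H1 : Prv T (fimp (feq (tsucc tzero) tzero) fbot)).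
  { apply HE.
    assert (H0 := P_mp PA _ _ (P_inst PA _ tzero) (P_gen PA _ (P_ax PA _ PA1))).
    exact H0. }
  assert (H2 := P_leib T (feq (tvar 0) tzero) tzero (tsucc tzero)).
  simpl in H2.
  eapply P_mp. eapply P_mp. apply P_S. eapply P_mp. apply P_K. exact H1.
  eapply P_mp. eapply P_mp. apply P_S. exact H2.
  eapply P_mp. apply P_K. apply P_refl.
Qed.

Lemma main T Pr four : extends_PA T -> prov_pred T Pr -> condM T Pr ->
  (four = true -> condD3 T Pr) -> forall A, mder four A -> PL T Pr A.
Proof.
  intros HE [HPr Hprov] HM HD3 A HA. induction HA; intros v Hv.
  - apply taut_prv; auto. apply bot_prv; auto.
  - eapply P_mp; eauto.
  - simpl. apply HE. apply Hprov. eexists; split; eauto.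
  - simpl. apply HM; try apply interp_sentence; auto. apply IHHA; auto.
  - simpl. apply HD3; auto. apply interp_sentence; auto.
Qed.

Theorem proposition4p1 (T : form -> Prop) (Pr : form) :
  pr_axiomatized T -> consistent T -> extends_PA T ->
  prov_pred T Pr -> condM T Pr ->
  (forall A, MN A -> PL T Pr A) /\
  (condD3 T Pr <-> (forall A, MNF A -> PL T Pr A)).
Proof.
  intros _ _ HE HP HM. split; [|split].
  - intros A. apply main; auto. discriminate.
  - intros HD A. apply main; auto.
  - intros H phi Hphi.
    assert (HA : MNF (mimp (mbox (mvar 0)) (mbox (mbox (mvar 0))))).
    { apply md_4; reflexivity. }
    exact (H _ HA (fun _ => phi) (fun _ => Hphi)).
Qed.
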